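(* Let $\rho$ be a rational number with $0<\rho<1$ and $\rho\neq\frac12$. Then there is no integer $n>1$ such that $$n\tan(\pi\rho)=\tan(n\pi\rho).$$ *)

(* Defs.v *)
From Stdlib Require Export Reals ZArith.

(* Main.v *)
Require Import Defs.
From Stdlib Require Import Lra Lia Psatz.
Open Scope R_scope.

Lemma trig_rel (n : nat) (x : R) : (0 < n)%nat ->
  INR n * sin x * cos (INR n * x) = sin (INR n * x) * cos x ->
  INR (Nat.pred n) * (cos (INR (S n) * (2 * x)) - 1) =
     INR (S n) * (cos (INR n * (2 * x)) - cos (2 * x)) /\
  INR (Nat.pred n) * sin (INR (S n) * (2 * x)) =
     INR (S n) * (sin (INR n * (2 * x)) - sin (2 * x)).
Proof.
intros Hn H.
destruct n as [|n']; [lia|].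
replace (INR (Nat.pred (S n'))) with (INR (S n') - 1) by (simpl pred; rewrite S_INR; ring).
set (m := INR (S n')) in *.
rewrite S_INR. fold m.
set (S1 := sin x) in *; set (C1 := cos x) in *.
set (Sn := sin (m * x)) in *; set (Cn := cos (m * x)) in *.
assert (Ea : (m + 1) * (2 * x) = (m * x + x) + (m * x + x)) by ring.
assert (Eb : m * (2 * x) = (m * x + x) + (m * x - x)) by ring.
assert (Ec : 2 * x = (m * x + x) - (m * x - x)) by ring.
rewrite Ea, Eb, Ec.
assert (Hsa : sin (m * x + x) = Sn * C1 + Cn * S1) by (rewrite sin_plus; unfold Sn, Cn, S1, C1; ring).
assert (Hca : cos (m * x + x) = Cn * C1 - Sn * S1) by (rewrite cos_plus; unfold Sn, Cn, S1, C1; ring).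
assert (Hsb : sin (m * x - x) = Sn * C1 - Cn * S1) by (rewrite sin_minus; unfold Sn, Cn, S1, C1; ring).
assert (Hcb : cos (m * x - x) = Cn * C1 + Sn * S1) by (rewrite cos_minus; unfold Sn, Cn, S1, C1; ring).
assert (Pa : sin (m*x+x) * sin (m*x+x) + cos (m*x+x) * cos (m*x+x) = 1) by (pose proof (sin2_cos2 (m*x+x)); unfold Rsqr in *; lra).
set (A := m * x + x) in *. set (B := m * x - x) in *.
rewrite (cos_plus A A), (sin_plus A A), (cos_plus A B), (sin_plus A B), cos_minus, sin_minus.
rewrite Hsa, Hca, Hsb, Hcb in *.
set (sa := Sn * C1 + Cn * S1) in *.
set (ca := Cn * C1 - Sn * S1) in *.
set (sb := Sn * C1 - Cn * S1) in *.
set (cb := Cn * C1 + Sn * S1) in *.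
assert (K : (m - 1) * sa = (m + 1) * sb) by (unfold sa, sb; nra).
assert (Pa' : sa*sa+ca*ca-1 = 0) by lra.
assert (K' : (m-1)*sa - (m+1)*sb = 0) by lra.
split; apply Rminus_diag_uniq.
- match goal with |- ?L - ?R = 0 =>
    replace (L - R) with ((m-1)*(sa*sa+ca*ca-1) - 2*sa*((m-1)*sa - (m+1)*sb)) by ring end.
  rewrite Pa', K'; ring.
- match goal with |- ?L - ?R = 0 =>
    replace (L - R) with (2*ca*((m-1)*sa - (m+1)*sb)) by ring end.
  rewrite K'; ring.
Qed.


Lemma real_prep (p q : Z) (hq : (0 < q)%Z) (h0 : 0 < IZR p / IZR q)
  (h1 : IZR p / IZR q < 1) (hhalf : IZR p / IZR q <> 1/2) (n : nat)
  (Hc : cos (INR n * PI * (IZR p / IZR q)) <> 0)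
  (Heq : INR n * tan (PI * (IZR p / IZR q)) = tan (INR n * PI * (IZR p / IZR q))) :
  INR n * sin (PI * (IZR p / IZR q)) * cos (INR n * (PI * (IZR p / IZR q))) =
    sin (INR n * (PI * (IZR p / IZR q))) * cos (PI * (IZR p / IZR q)) /\
  sin (2 * (PI * (IZR p / IZR q))) <> 0 /\
  cos (INR (Z.to_nat q) * (2 * (PI * (IZR p / IZR q)))) = 1 /\
  sin (INR (Z.to_nat q) * (2 * (PI * (IZR p / IZR q)))) = 0.
Proof.
set (r := IZR p / IZR q) in *.
set (x := PI * r).
assert (Hq : 0 < IZR q) by (apply IZR_lt; exact hq).
assert (HPI := PI_RGT_0).
assert (Hx0 : 0 < x) by (unfold x; nra).
assert (HxPI : x < PI) by (unfold x; nra).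
assert (Hs : 0 < sin x) by (apply sin_gt_0; assumption).
assert (Hcx : cos x <> 0).
{ intro Hc0. destruct (Rtotal_order x (PI/2)) as [Hl|[He|Hg]].
  - assert (0 < cos x) by (apply cos_gt_0; lra). lra.
  - apply hhalf. unfold x in He. apply (Rmult_eq_reg_l PI); [|lra]. lra.
  - assert (cos x < 0) by (apply cos_lt_0; lra). lra. }
rewrite Rmult_assoc in Hc, Heq. fold x in Hc, Heq.
split; [|split; [|split]].
- unfold tan in Heq.
  transitivity (INR n * (sin x / cos x) * cos x * cos (INR n * x)); [field; assumption|].
  rewrite Heq. field. assumption.
- rewrite sin_2a. intro H2. apply Rmult_integral in H2. destruct H2 as [H2|H2]; [|contradiction].
  apply Rmult_integral in H2; destruct H2; lra.
- assert (Hp : (0 <= p)%Z).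
  { apply le_IZR. assert (IZR p = r * IZR q) by (unfold r; field; lra). nra. }
  replace (INR (Z.to_nat q) * (2 * x)) with (0 + 2 * INR (Z.to_nat p) * PI).
  + rewrite cos_period. apply cos_0.
  + rewrite !INR_IZR_INZ, !Z2Nat.id by lia. unfold x, r. field. lra.
- assert (Hp : (0 <= p)%Z).
  { apply le_IZR. assert (IZR p = r * IZR q) by (unfold r; field; lra). nra. }
  replace (INR (Z.to_nat q) * (2 * x)) with (0 + 2 * INR (Z.to_nat p) * PI).
  + rewrite sin_period. apply sin_0.
  + rewrite !INR_IZR_INZ, !Z2Nat.id by lia. unfold x, r. field. lra.
Qed.

From HB Require Import structures.
From mathcomp Require Import all_boot all_order all_algebra all_fingroup all_field all_character.
From mathcomp Require Import Rstruct complex.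
From mathcomp Require Import ring.
Set Implicit Arguments. Unset Strict Implicit. Unset Printing Implicit Defensive.
Import Order.TTheory GRing.Theory Num.Theory.

Module Helpers.
Local Open Scope group_scope.
Local Open Scope ring_scope.

Lemma prod_le1 (I : finType) (P : pred I) (F : I -> algC) :
  (forall i, P i -> 0 <= F i <= 1) -> \prod_(i | P i) F i <= 1.
Proof.
move=> H; suff /andP[] : 0 <= \prod_(i | P i) F i <= 1 by [].
apply: (big_ind (fun x => 0 <= x <= 1)) => [|x y /andP[x0 x1] /andP[y0 y1]|]; last by [].
- by rewrite ler01 lexx.
- by rewrite mulr_ge0 //= -[1]mulr1 ler_pM.
Qed.

Lemma partC (m n M N : nat) : (2 < m)%N -> (2 < N)%N -> coprime M N ->
  (forall z : algC, m.-primitive_root z -> M%:R * (z ^+ n.+1 - 1) = N%:R * (z ^+ n - z)) -> False.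
Proof.
move=> m_gt2 N_gt2 coMN rel.
have m_gt0 : (0 < m)%N by apply: leq_trans m_gt2.
have N_gt0 : (0 < N)%N by apply: leq_trans N_gt2.
have [Qn galQn [QnC gQnC [w [prim_w _] _]]] := group_num_field_exists (Zp_group m).
rewrite card_Zp // in prim_w.
set zeta := QnC w.
have prim_z : m.-primitive_root zeta by rewrite fmorph_primitive_root.
have Hrel := rel zeta prim_z.
have nzN : N%:R != 0 :> algC by rewrite pnatr_eq0 -lt0n.
pose alpha := (zeta ^+ n.+1 - 1) / N%:R.
have aN : alpha * N%:R = zeta ^+ n.+1 - 1 by rewrite divfK.
have aM : alpha * M%:R = zeta ^+ n - zeta.
  by apply: (mulIf nzN); rewrite /alpha mulrAC divfK // mulrC Hrel mulrC.
have Za : alpha \in Aint.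
  have [u _ /dvdnP[v eq_uv]] := Bezoutl M N_gt0.
  have Zz : zeta \in Aint by apply: Aint_prim_root prim_z.
  have -> : alpha = v%:R * (alpha * N%:R) - u%:R * (alpha * M%:R).
    rewrite mulrCA -natrM -eq_uv gcdnC (eqnP coMN).
    by rewrite [u%:R * _]mulrCA -natrM natrD mulrDr mulr1 addrK.
  rewrite aN aM.
  by rewrite rpredB // rpredM ?rpred_nat // ?rpredB ?rpredX ?rpred1.
have [a Da] : exists a, QnC a = alpha.
  exists ((w ^+ n.+1 - 1) / N%:R).
  by rewrite fmorph_div rmorphB rmorphXn rmorph1 rmorph_nat.
have N_lt : 2%:R < N%:R :> algC by rewrite ltr_nat.
have norm_a_nu (nu : {rmorphism algC -> algC}) : `|nu alpha| < 1.
  rewrite /alpha fmorph_div rmorphB rmorphXn rmorph1 rmorph_nat normrM normfV normr_nat.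
  have Hn1 : `|nu zeta| = 1.
    apply/eqP; rewrite -(@pexpr_eq1 _ _ m) //.
    by rewrite -normrX -rmorphXn (prim_expr_order prim_z) rmorph1 normr1.
  have H2 : `|nu zeta ^+ n.+1 - 1| <= 2%:R.
    by apply: le_trans (ler_normB _ _) _; rewrite normrX Hn1 expr1n normr1.
  rewrite ltr_pdivrMr ?ltr0n // mul1r.
  by apply: le_lt_trans H2 N_lt.
have Za_nu nu : sval (gQnC nu) alpha \in Aint by rewrite Aint_aut.
pose beta := QnC (galNorm 1 {:Qn} a).
have Dbeta: beta = \prod_(nu in 'Gal({:Qn} / 1)) sval (gQnC nu) alpha.
  rewrite /beta rmorph_prod. apply: eq_bigr => nu _.
  by case: (gQnC nu) => f /= ->; rewrite Da.
have Zbeta: beta \in Num.int.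
  apply: Cint_rat_Aint; last by rewrite Dbeta rpred_prod.
  rewrite /beta; have /vlineP[/= c ->] := mem_galNorm galQn (memvf a).
  by rewrite alg_num_field fmorph_rat rpred_rat.
have [a0|nz_a] := eqVneq alpha 0.
  have z1 : zeta ^+ n.+1 = 1 by apply/eqP; rewrite -subr_eq0 -aN a0 mul0r.
  move: Hrel; rewrite z1 subrr mulr0 => /esym/eqP; rewrite mulf_eq0 (negbTE nzN) /=.
  rewrite subr_eq0 => /eqP zn.
  have z2 : zeta ^+ 2 = 1 by rewrite -z1 [in RHS]exprS zn -expr2.
  have := prim_order_dvd prim_z 2; rewrite z2 eqxx => /dvdn_leq.
  by move=> /(_ isT); rewrite leqNgt m_gt2.
have: beta != 0 by rewrite Dbeta; apply/prodf_neq0 => nu _; rewrite fmorph_eq0.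
move/(norm_intr_ge1 Zbeta); rewrite Dbeta normr_prod => H1.
have : \prod_(nu in 'Gal({:Qn} / 1)) `|sval (gQnC nu) alpha| < 1.
  rewrite (bigD1 1%g) ?group1 //=.
  apply: le_lt_trans (_ : `|sval (gQnC 1%g) alpha| * 1 < 1).
    apply: ler_wpM2l => //. 
    apply: prod_le1 => nu _.
    by rewrite normr_ge0 ltW.
  by rewrite mulr1 norm_a_nu.
by move=> H2; move: (le_lt_trans H1 H2); rewrite ltxx.
Qed.


Definition Pp (R : nzRingType) (M N n : nat) : {poly R} :=
  M%:R * ('X^(n.+1) - 1) - N%:R * ('X^n - 'X).

Lemma rootPp (R : comNzRingType) M N n (z : R) :
  root (Pp R M N n) z = (M%:R * (z ^+ n.+1 - 1) == N%:R * (z ^+ n - z)).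
Proof. by rewrite /root /Pp -!polyC_natr !hornerE subr_eq0. Qed.

Lemma map_Pp (R S : nzRingType) (f : {rmorphism R -> S}) M N n :
  map_poly f (Pp R M N n) = Pp S M N n.
Proof.
by rewrite /Pp rmorphB !rmorphM !rmorphB /= !map_polyXn map_polyX rmorph1 !rmorph_nat.
Qed.

Lemma Phi_root (F : fieldType) (z : F) m :
  m.-primitive_root z -> root (map_poly intr 'Phi_m) z.
Proof.
move=> prim_z; have m_gt0 := prim_order_gt0 prim_z.
have := prod_Cyclotomic m_gt0.
move=> /(congr1 (map_poly (intr : int -> F))).
rewrite rmorph_prod rmorphB rmorph1 /= map_polyXn => Hp.
have : root (\prod_(d <- divisors m) map_poly intr 'Phi_d) z.
  by rewrite Hp /root !hornerE (prim_expr_order prim_z) subrr.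
rewrite /root horner_prod prodf_seq_eq0 => /hasP[d]; rewrite -dvdn_divisors // => dm /= rd.
have [dm0|ne] := eqVneq d m; first by rewrite -dm0.
have d_gt0 : (0 < d)%N by apply: dvdn_gt0 dm.
have : z ^+ d = 1.
  have := prod_Cyclotomic d_gt0.
  move=> /(congr1 (map_poly (intr : int -> F))).
  rewrite rmorph_prod rmorphB rmorph1 /= map_polyXn => Hd.
  have : root ('X^d - 1) z.
    rewrite -Hd /root horner_prod prodf_seq_eq0; apply/hasP; exists d => //.
    by rewrite -dvdn_divisors.
  by rewrite /root !hornerE subr_eq0 => /eqP.
move/eqP; rewrite -(prim_order_dvd prim_z) => md.
by move: ne; rewrite eqn_dvd md dm.
Qed.

Local Notation pQtoC := (map_poly (@ratr algC)).
Local Notation pZtoC := (map_poly (intr : int -> algC)).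

Lemma transfer (F : numFieldType) (z : F) m M N n :
  m.-primitive_root z -> root (Pp F M N n) z ->
  forall zeta : algC, m.-primitive_root zeta -> root (Pp algC M N n) zeta.
Proof.
move=> prim_z rz zeta prim_zeta.
have [p [Dp monp] minp] := minCpolyP zeta.
have Dp2 : forall w : algC, m.-primitive_root w -> pQtoC p = pZtoC 'Phi_m.
  move=> w prim_w; rewrite (Cintr_Cyclotomic prim_w) -(minCpoly_cyclotomic prim_w).
  by rewrite -Dp !(minCpoly_cyclotomic prim_w, minCpoly_cyclotomic prim_zeta)
        -(Cintr_Cyclotomic prim_zeta) (Cintr_Cyclotomic prim_w).
have Dp3 : p = map_poly intr 'Phi_m.
  apply: (map_inj_poly (fmorph_inj (@ratr algC)) (rmorph0 _)).
  rewrite (Dp2 _ prim_zeta) -map_poly_comp; apply: eq_map_poly => x /=.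
  by rewrite rmorph_int.
pose Q := Pp rat M N n.
have ncop : ~~ coprimep p Q.
  apply/negP => cop.
  have : coprimep (map_poly (@ratr F) p) (map_poly (@ratr F) Q) by rewrite coprimep_map.
  move/coprimep_root => /(_ z).
  have -> : map_poly (@ratr F) p = map_poly intr 'Phi_m.
    by rewrite Dp3 -map_poly_comp; apply: eq_map_poly => x /=; rewrite rmorph_int.
  move=> /(_ (Phi_root prim_z)); rewrite /Q map_Pp.
  by move: rz; rewrite /root => /eqP ->; rewrite eqxx.
have [w rw] : exists w, root (pQtoC (gcdp p Q)) w.
  by apply/closed_rootP; rewrite size_map_poly.
have rpw : root (pQtoC p) w by apply: root_dvdp rw; rewrite dvdp_map dvdp_gcdl.
have rQw : root (pQtoC Q) w by apply: root_dvdp rw; rewrite dvdp_map dvdp_gcdr.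
have prim_w : m.-primitive_root w.
  by move: rpw; rewrite (Dp2 _ prim_zeta) (Cintr_Cyclotomic prim_zeta) root_cyclotomic.
have [p' [Dp' _] minp'] := minCpolyP w.
have pp' : p' = p.
  apply: (map_inj_poly (fmorph_inj (@ratr algC)) (rmorph0 _)).
  by rewrite -Dp' (Dp2 _ prim_w) (minCpoly_cyclotomic prim_w) (Cintr_Cyclotomic prim_w).
have : root (pQtoC Q) zeta by rewrite minp -pp' -minp'.
by rewrite /Q map_Pp.
Qed.

Lemma finish (F : numFieldType) (z : F) m M N n : (2 < m)%N -> (2 < N)%N ->
  coprime M N -> m.-primitive_root z ->
  M%:R * (z ^+ n.+1 - 1) = N%:R * (z ^+ n - z) -> False.
Proof.
move=> m2 N2 coMN pz Hrel.
apply: (partC m2 N2 coMN) => zeta pzeta.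
apply/eqP; rewrite -rootPp; apply: (transfer pz _ pzeta).
by rewrite rootPp; apply/eqP; exact: Hrel.
Qed.

Local Open Scope complex_scope.
Definition E (t : R) : R[i] := Complex (cos t) (sin t).

Lemma E_mul a b : E a * E b = E (a + b).
Proof.
rewrite /E /GRing.mul /=; congr Complex.
  by rewrite cos_plus.
by rewrite sin_plus /GRing.add /= Rplus_comm.
Qed.

Lemma E_exp t k : E t ^+ k = E (INR k * t).
Proof.
elim: k => [|k IH].
  by rewrite expr0 /E Rmult_0_l cos_0 sin_0.
by rewrite exprSr IH E_mul S_INR Rmult_plus_distr_r Rmult_1_l.
Qed.


Lemma natC k : (k%:R : R[i]) = Complex (k%:R) 0.
Proof. by rewrite -(rmorph_nat (real_complex R)). Qed.

Lemma rel_complex n x : (0 < n)%N ->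
  (INR n * sin x * cos (INR n * x) = sin (INR n * x) * cos x)%R ->
  (n.-1)%:R * (E (2 * x) ^+ n.+1 - 1) = (n.+1)%:R * (E (2 * x) ^+ n - E (2 * x)).
Proof.
move=> n0 H.
have [] := @trig_rel n x (elimT ssrnat.ltP n0) H.
rewrite !E_exp !natC /E.
set c1 := cos (INR n.+1 * (2 * x)); set s1 := sin (INR n.+1 * (2 * x)).
set c2 := cos (INR n * (2 * x)); set s2 := sin (INR n * (2 * x)).
set c3 := cos (2 * x); set s3 := sin (2 * x).
rewrite -!INRE => Hre Him.
rewrite /GRing.mul /GRing.add /GRing.opp /=; congr Complex.
  by rewrite !mul0r !subr0; exact Hre.
by rewrite !mul0r !subr0 !addr0; exact Him.
Qed.

End Helpers.
Import Helpers.

Theorem theorem1 (p q : Z) (hq : Z.lt 0 q)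
  (h0 : 0 < IZR p / IZR q) (h1 : IZR p / IZR q < 1)
  (hhalf : IZR p / IZR q <> 1/2) :
  ~ exists n : nat, (1 < n)%coq_nat /\
      cos (INR n * PI * (IZR p / IZR q)) <> 0 /\
      INR n * tan (PI * (IZR p / IZR q)) = tan (INR n * PI * (IZR p / IZR q)).
Proof.
Local Open Scope ring_scope.
move=> [n [Hn [Hc Heq]]].
have [H [Hs2 [Hcq Hsq]]] := real_prep p q hq h0 h1 hhalf n Hc Heq.
move: H Hs2 Hcq Hsq.
set x := (PI * (IZR p / IZR q))%R => H Hs2 Hcq Hsq.
have n1 : (1 < n)%N by apply/ssrnat.ltP.
have n0 : (0 < n)%N by apply: ltnW.
have Hrel := rel_complex n0 H.
move: Hrel; set z := E (2 * x) => Hrel.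
have q0 : (0 < Z.to_nat q)%N by apply/ssrnat.ltP; lia.
have zq : z ^+ (Z.to_nat q) = 1 by rewrite /z E_exp /E Hcq Hsq.
have [m pz _] := prim_order_exists q0 zq.
have z2 : z ^+ 2 != 1.
  apply/negP => /eqP z2.
  have : (z - 1) * (z + 1) == 0 by rewrite -subr_sqr expr1n z2 subrr.
  rewrite mulf_eq0 subr_eq0 addr_eq0 => /orP[] /eqP Hz; apply: Hs2;
    move: (congr1 (@complex.Im R) Hz); rewrite /z /E /= => ->; first by [].
  by rewrite /GRing.opp /=; exact: Ropp_0.
have m2 : (2 < m)%N.
  have m0 := prim_order_gt0 pz.
  rewrite ltnNge; apply/negP => Hm.
  have : (m %| 2)%N by move: m0 Hm; case: (m) => [|[|[|]]].
  by rewrite (prim_order_dvd pz) (negbTE z2).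
have [n3|n3] := eqVneq n 3.
  move: Hrel; rewrite n3 => Hrel.
  have : (z - 1) ^+ 3 * (z + 1) * 2%:R = 0.
    transitivity (2%:R * (z ^+ 4 - 1) - 4%:R * (z ^+ 3 - z)); first by ring.
    by rewrite Hrel subrr.
  move/eqP; rewrite !mulf_eq0 pnatr_eq0 orbF !orbb subr_eq0 addr_eq0 => /orP[] /eqP Hz;
    by move/negP: z2; apply; rewrite Hz ?sqrrN expr1n; apply/eqP.
case/boolP: (odd n) => Hodd.
  set k := n./2.
  have Dn : n = k.*2.+1 by rewrite -[n in LHS]odd_double_half Hodd.
  have k2 : (2 < k.+1)%N.
    move: n1 n3; rewrite Dn; case: (k) => [|[|]] //.
  have e1 : (n.-1)%:R = k%:R * 2%:R :> R[i] by rewrite -natrM Dn muln2.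
  have e2 : (n.+1)%:R = k.+1%:R * 2%:R :> R[i] by rewrite -natrM Dn muln2 doubleS.
  move: Hrel; rewrite e1 e2 => Hrel.
  apply: (@finish _ z m k k.+1 n m2 k2 (coprimenS k) pz).
  apply: (@mulfI _ 2%:R); first by rewrite pnatr_eq0.
  by rewrite !mulrA ![2%:R * _]mulrC.
have N2 : (2 < n.+1)%N by [].
have co : coprime n.-1 n.+1.
  have -> : n.+1 = (n.-1 + 2)%N by case: (n) n0 => // n' _; rewrite addn2.
  rewrite /coprime gcdnDl -/(coprime _ _) coprimen2.
  by move: Hodd; case: (n) n0 => // n' _; rewrite /= negbK.
exact: (finish m2 N2 co pz Hrel).
Qed.
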